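(* Let $k\ge 2$, and let $p,q$ be real polynomials with $\deg p=k$, $\deg q=k-1$, whose roots are real, simple and strictly interlacing, with roots of $p$ denoted $p_1<\dots<p_k$. Let $r>0$ and $\varphi\in(-\pi,\pi]$. Then all solutions $z\in\mathbb{C}$ of $\frac{q(z)}{p(z)}=re^{i\varphi}$, except at most one, lie in the closed disk $\{z:|z-\frac{p_1+p_k}{2}|\le\frac{p_k-p_1}{2}\}$. *)

(* Defs.v *)
(* Complex numbers: an arbitrary numClosedFieldType C
   (e.g. algC); "real" = Num.real elements of C. *)
From HB Require Import structures.
From mathcomp Require Import all_boot all_order all_algebra.
Set Implicit Arguments. Unset Strict Implicit. Unset Printing Implicit Defensive.
Import Order.TTheory GRing.Theory Num.Theory.
Local Open Scope ring_scope.

Definition simple_real_roots (C : numClosedFieldType) (p : {poly C})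
  (ps : seq C) : Prop :=
  [/\ all (fun x => x \is Num.real) ps,
      sorted <%R ps &
      p = lead_coef p *: \prod_(x <- ps) ('X - x%:P)].

Definition strictly_interlacing (C : numClosedFieldType) (ps qs : seq C) : Prop :=
  size qs = (size ps).-1 /\
  forall i : nat, (i < (size ps).-1)%N -> ps`_i < qs`_i < ps`_i.+1.

(* Main.v *)
Require Import Defs.
From HB Require Import structures.
From mathcomp Require Import all_boot all_order all_algebra.
Import Order.TTheory GRing.Theory Num.Theory.
Local Open Scope ring_scope.

Section Helpers.
Local Set Implicit Arguments.
Local Unset Strict Implicit.
Section Geo.
Variable C : numClosedFieldType.
Implicit Types a b x y w z : C.

Definition Qc x := `|'Im x| < 'Re x.

Lemma QcM x y : Qc x -> Qc y -> 0 < 'Re (x * y).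
Proof.
rewrite /Qc => hx hy; rewrite ReM subr_gt0.
apply: (le_lt_trans (real_ler_norm _)); first by rewrite rpredM.
by rewrite normrM; apply: ltr_pM.
Qed.

Lemma QcZ c x : 0 < c -> Qc x -> Qc (c * x).
Proof.
rewrite /Qc => c0 hx; have cR : c \is Num.real by rewrite gtr0_real.
by rewrite ReMl // ImMl // normrM gtr0_norm // ltr_pM2l.
Qed.

Lemma Qc_neq0 x : Qc x -> x != 0.
Proof. by rewrite /Qc; apply: contraTneq => ->; rewrite !raddf0 normr0 ltxx. Qed.

Lemma QcV x : Qc x -> Qc x^-1.
Proof.
move=> hx; have x0 := Qc_neq0 hx; move: hx; rewrite /Qc ReV ImV => hx.
have n0 : 0 < `|x| ^+ 2 by rewrite exprn_gt0 // normr_gt0.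
have n1 : 0 < (`|x| ^+ 2)^-1 by rewrite invr_gt0.
by rewrite mulNr normrN normrM (gtr0_norm n1) ltr_pM2r.
Qed.

Lemma QcC s t x y : 0 <= s -> 0 <= t -> s + t = 1 -> Qc x -> Qc y -> Qc (s * x + t * y).
Proof.
rewrite /Qc => s0 t0 st hx hy.
have sR : s \is Num.real by rewrite ger0_real.
have tR : t \is Num.real by rewrite ger0_real.
rewrite !raddfD /= !ReMl // !ImMl //.
apply: (le_lt_trans (ler_normD _ _)); rewrite !normrM (ger0_norm s0) (ger0_norm t0).
have [se|sp] := eqVneq s 0.
  by move: st; rewrite se add0r => ->; rewrite !mul0r !add0r !mul1r.
have sp' : 0 < s by rewrite lt_def sp s0.
by apply: ltr_leD; [rewrite ltr_pM2l | rewrite ler_wpM2l // ltW].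
Qed.

Lemma Qc_base w : 0 < 'Re w -> Qc (`|w| + w).
Proof.
move=> hw; rewrite /Qc !raddfD /=.
have /Creal_ReP -> : `|w| \is Num.real by apply: normr_real.
have /Creal_ImP -> : `|w| \is Num.real by apply: normr_real.
rewrite add0r; apply: (le_lt_trans _ (ltr_pwDr hw (lexx _))).
have := leif_normC_Re_Creal ('i * w); rewrite ReMil normrN normrM normCi mul1r.
by case.
Qed.

Lemma Qc_end A B : 0 < 'Re (A * B^*) ->
  let e := `|B| * A + `|A| * B in Qc (A * e^*) /\ Qc (B * e^*).
Proof.
move=> hw e.
have A0 : A != 0 by apply: contraTneq hw => ->; rewrite mul0r raddf0 ltxx.
have B0 : B != 0 by apply: contraTneq hw => ->; rewrite rmorph0 mulr0 raddf0 ltxx.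
have cA : `|A|^* = `|A| by apply: conj_Creal; apply: normr_real.
have cB : `|B|^* = `|B| by apply: conj_Creal; apply: normr_real.
have eE : e^* = `|B| * A^* + `|A| * B^* by rewrite /e rmorphD !rmorphM /= cA cB.
split.
  have -> : A * e^* = `|A| * (`|A * B^*| + A * B^*).
    rewrite eE normrM norm_conjC mulrDr mulrDr; congr (_ + _); last exact: mulrCA.
    by rewrite mulrCA -normCK expr2 mulrC mulrA.
  by apply: QcZ; [rewrite normr_gt0|apply: Qc_base].
have -> : B * e^* = `|B| * (`|(A * B^*)^*| + (A * B^*)^*).
  rewrite eE norm_conjC normrM norm_conjC rmorphM /= conjCK mulrDr mulrDr addrC.
  congr (_ + _); first by rewrite mulrCA -normCK expr2 mulrCA.
  by rewrite mulrCA [B * _]mulrC.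
apply: QcZ; first by rewrite normr_gt0.
by apply: Qc_base; rewrite Re_conj.
Qed.

Lemma half_id a b : (b - a) / 2%:R - (a + b) / 2%:R = - a.
Proof.
have n2 : (2%:R : C) != 0 by rewrite pnatr_eq0.
by rewrite -mulrBl addrC addrA opprD subrK -opprD -mulr2n -[a *+ 2]mulr_natr mulNr mulfK.
Qed.

Lemma half_id2 a b : - (b - a) / 2%:R - (a + b) / 2%:R = - b.
Proof.
have n2 : (2%:R : C) != 0 by rewrite pnatr_eq0.
by rewrite -mulrBl opprB [a - b]addrC addrKA -opprD -mulr2n -[b *+ 2]mulr_natr mulNr mulfK.
Qed.

Lemma ext_pos a b z : a \is Num.real -> b \is Num.real -> a <= b ->
  ~ (`|z - (a + b) / 2%:R| <= (b - a) / 2%:R) -> 0 < 'Re ((z - a) * (z - b)^*).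
Proof.
move=> aR bR ab hz.
set y := z - (a + b) / 2%:R; set R := (b - a) / 2%:R.
have R0 : 0 <= R by rewrite divr_ge0 ?subr_ge0 // ler0n.
have RR : R \is Num.real by rewrite ger0_real.
have yR : R < `|y| by rewrite real_ltNge ?normr_real //; apply/negP.
have eA : z - a = y + R.
  by rewrite /y /R -addrA; congr (_ + _); rewrite addrC half_id.
have eB : z - b = y - R.
  by rewrite /y /R -addrA; congr (_ + _); rewrite addrC -(half_id2 a b) mulNr.
clearbody y R.
rewrite eA eB rmorphB /= (conj_Creal RR) mulrDl !mulrBr !raddfD !raddfN /=.
rewrite (ReMr RR) (ReMl RR) Re_conj -normCK.
have /Creal_ReP -> : `|y| ^+ 2 \is Num.real by rewrite rpredX // normr_real.
have /Creal_ReP -> : R * R \is Num.real by rewrite rpredM.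
rewrite [R * 'Re y]mulrC addrA subrK subr_gt0 expr2.
by apply: ltr_pM.
Qed.


Lemma seg_dir a b z : a < b -> 0 < 'Re ((z - a) * (z - b)^*) ->
  exists e : C, forall x, a <= x -> x <= b -> Qc (e / (z - x)).
Proof.
move=> ab hw; have [hA hB] := Qc_end hw.
set e := `|z - b| * (z - a) + `|z - a| * (z - b) in hA hB *.
exists e => x ax xb.
have ba : 0 < b - a by rewrite subr_gt0.
have ba0 : b - a != 0 by rewrite gt_eqF.
set t := (b - x) / (b - a); set s := (x - a) / (b - a).
have t0 : 0 <= t by rewrite divr_ge0 // ?subr_ge0 // ltW.
have s0 : 0 <= s by rewrite divr_ge0 // ?subr_ge0 // ltW.
have ts : t + s = 1 by rewrite /t /s -mulrDl addrA subrK divff.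
have hx : t * a + s * b = x.
  rewrite /t /s mulrAC [(x - a) / _ * b]mulrAC -mulrDl mulrBl mulrBl.
  by rewrite [b * a]mulrC addrC addrA subrK -mulrBr mulfK.
have ex : (z - x) * e^* = t * ((z - a) * e^*) + s * ((z - b) * e^*).
  rewrite !mulrA -mulrDl; congr (_ * _).
  by rewrite !mulrBr addrACA -mulrDl ts mul1r -opprD hx.
have h : Qc ((z - x) * e^*) by rewrite ex; apply: QcC.
have ne : e != 0.
  apply/negP => /eqP e0; move: (Qc_neq0 h); rewrite e0 rmorph0 mulr0 eqxx //.
have -> : e / (z - x) = (e * e^*) * ((z - x) * e^*)^-1.
  by rewrite invfM mulrACA mulfV ?conjC_eq0 // mulr1.
by apply: QcZ; [rewrite mul_conjC_gt0 | apply: QcV].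
Qed.

Lemma sum_ne0 n (c u v : 'I_n -> C) e g : (0 < n)%N -> (forall i, 0 < c i) ->
  (forall i, Qc (e / u i)) -> (forall i, Qc (g / v i)) ->
  \sum_(i < n) c i / (u i * v i) != 0.
Proof.
move=> n0 cp hu hv; apply/negP => /eqP s0.
have : 'Re (e * g * \sum_(i < n) c i / (u i * v i)) = 0 by rewrite s0 mulr0 raddf0.
rewrite mulr_sumr raddf_sum /=.
have tp i : 0 < 'Re (e * g * (c i / (u i * v i))).
  rewrite invfM mulrCA (mulrACA e) ReMl ?gtr0_real //.
  by rewrite pmulr_rgt0 // QcM.
rewrite (bigD1 (Ordinal n0)) //= => /eqP; rewrite gt_eqF //.
by apply: ltr_wpDr; [apply: sumr_ge0 => i _; apply: ltW | apply: tp].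
Qed.

End Geo.

Lemma prod_omit (R : comNzRingType) n (i : 'I_n) (F : 'I_n -> R) :
  \prod_(j | j != i) F j = \prod_(j < n.-1) F (lift i j).
Proof.
rewrite (reindex_omap (lift i) (unlift i)) /=.
  by apply: eq_bigl => j; rewrite liftK eqxx eq_sym neq_lift.
by move=> j; case: unliftP => [k ->|->]; rewrite ?eqxx.
Qed.
Section Lag.
Variable F : fieldType.

Lemma size_omit n (xs : 'I_n -> F) (i : 'I_n) :
  size (\prod_(j | j != i) ('X - (xs j)%:P)) = n.
Proof.
rewrite size_prod => [|j _]; last by rewrite polyXsubC_eq0.
under eq_bigr do rewrite size_XsubC.
rewrite sum_nat_const cardC1 card_ord.
case: n xs i => [? []//|n] _ i /=.
by rewrite muln2 -addnn -addSn addnK.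
Qed.

Lemma lagrange n (xs : 'I_n -> F) (f : {poly F}) : injective xs ->
  (size f <= n)%N ->
  f = \sum_(i < n) (f.[xs i] / \prod_(j | j != i) (xs i - xs j)) *:
         \prod_(j | j != i) ('X - (xs j)%:P).
Proof.
move=> inj sf; apply/eqP; rewrite -subr_eq0; apply/eqP.
apply: (@roots_geq_poly_eq0 _ _ [seq xs i | i <- enum 'I_n]).
- apply/allP => _ /mapP [m _ ->]; rewrite rootE hornerD hornerN horner_sum.
  rewrite (bigD1 m) //= [X in _ - (_ + X)]big1 => [|i im].
    rewrite hornerZ horner_prod addr0.
    under [X in _ / _ * X]eq_bigr do rewrite hornerXsubC.
    rewrite divfK ?subrr //; apply/prodf_neq0 => j jm.
    by rewrite subr_eq0; apply: contra jm => /eqP/inj ->.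
  rewrite hornerZ horner_prod [X in _ * X](bigD1 m) 1?eq_sym //= hornerXsubC subrr.
  by rewrite mul0r mulr0.
- by rewrite map_inj_uniq ?enum_uniq.
rewrite size_map size_enum_ord.
apply: (leq_trans (size_polyD _ _)); rewrite size_polyN geq_max sf /=.
apply: (leq_trans (size_sum _ _ _)); apply/bigmax_leqP => i _.
by apply: (leq_trans (size_scale_leq _ _)); rewrite size_omit.
Qed.
End Lag.
End Helpers.

Theorem corollary2 (C : numClosedFieldType) (k : nat) (p q : {poly C})
  (ps qs : seq C) (w : C) :
  (2 <= k)%N ->
  p \is a polyOver Num.real -> q \is a polyOver Num.real ->
  size p = k.+1 -> size q = k ->
  size ps = k -> simple_real_roots p ps -> simple_real_roots q qs ->
  strictly_interlacing ps qs ->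
  w != 0 ->
  forall z1 z2 : C,
    p.[z1] != 0 -> q.[z1] / p.[z1] = w ->
    p.[z2] != 0 -> q.[z2] / p.[z2] = w ->
    ~ (`|z1 - (ps`_0 + ps`_k.-1) / 2%:R| <= (ps`_k.-1 - ps`_0) / 2%:R) ->
    ~ (`|z2 - (ps`_0 + ps`_k.-1) / 2%:R| <= (ps`_k.-1 - ps`_0) / 2%:R) ->
    z1 = z2.
Proof.
move=> k2 pR qR sp sq sps [psR pss hp] [qsR qss hq] [sqs inter] _ z1 z2 pz1 qz1 pz2 qz2 h1 h2.
apply/eqP; apply: contraT => z12.
have k0 : (0 < k)%N by apply: leq_trans k2.
have psi i : (i < k)%N -> ps`_i \is Num.real.
  by move=> hi; apply: (all_nthP 0 psR); rewrite sps.
have lt_ps i j : (i < j)%N -> (j < k)%N -> ps`_i < ps`_j.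
  move=> ij jk; apply: (sorted_ltn_nth lt_trans 0 pss) => //; rewrite inE sps //.
  by apply: ltn_trans jk.
have le_ps i j : (i <= j)%N -> (j < k)%N -> ps`_i <= ps`_j.
  rewrite leq_eqVlt => /orP [/eqP -> //|ij] jk; exact/ltW/lt_ps.
have kk : (k.-1 < k)%N by rewrite prednK.
have ab : ps`_0 < ps`_k.-1 by apply: lt_ps => //; rewrite -ltnS prednK.
have aR := psi 0%N k0; have bR := psi _ kk.
have [e he] := seg_dir ab (ext_pos aR bR (ltW ab) h1).
have [g hg] := seg_dir ab (ext_pos aR bR (ltW ab) h2).
pose xs (i : 'I_k) := ps`_i.
have xab (i : 'I_k) : ps`_0 <= xs i <= ps`_k.-1.
  by rewrite /xs le_ps // le_ps // -ltnS prednK.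
have inj : injective xs.
  move=> i j /eqP; apply: contraTeq; rewrite neq_ltn => /orP [] ij.
    by rewrite lt_eqF // lt_ps.
  by rewrite gt_eqF // lt_ps.
have lp0 : lead_coef p != 0 by rewrite lead_coef_eq0 -size_poly_gt0 sp.
have lq0 : lead_coef q != 0 by rewrite lead_coef_eq0 -size_poly_gt0 sq.
have lqR : lead_coef q \is Num.real.
  by rewrite lead_coefE; apply: (polyOverP qR).
have peval z : p.[z] = lead_coef p * \prod_(i < k) (z - xs i).
  rewrite {1}hp hornerZ horner_prod (big_nth 0) big_mkord sps.
  by congr (_ * _); apply: eq_bigr => i _; rewrite hornerXsubC.
have qeval' z : q.[z] = lead_coef q * \prod_(j < k.-1) (z - qs`_j).
  rewrite {1}hq hornerZ horner_prod (big_nth 0) big_mkord sqs sps.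
  by congr (_ * _); apply: eq_bigr => i _; rewrite hornerXsubC.
pose c (i : 'I_k) := q.[xs i] / \prod_(j | j != i) (xs i - xs j).
have qeval z : q.[z] = \sum_(i < k) c i * \prod_(j | j != i) (z - xs j).
  rewrite {1}(lagrange inj (eq_leq sq)) horner_sum; apply: eq_bigr => i _.
  by rewrite hornerZ horner_prod; congr (_ * _); apply: eq_bigr => j _; rewrite hornerXsubC.
have nz z i : p.[z] != 0 -> z - xs i != 0.
  by rewrite peval mulf_eq0 negb_or => /andP [_ /prodf_neq0 H]; apply: H.
have qpS z : p.[z] != 0 -> q.[z] / p.[z] =
    (\sum_(i < k) c i / (z - xs i)) / lead_coef p.
  move=> pz; have := pz; rewrite peval mulf_eq0 negb_or => /andP [_ U0].
  rewrite qeval invfM [(lead_coef p)^-1 * _]mulrC mulrA; congr (_ * _).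
  rewrite big_distrl /=; apply: eq_bigr => i _.
  have P0 : \prod_(j | j != i) (z - xs j) != 0.
    by apply/prodf_neq0 => j _; apply: nz.
  by rewrite [in X in _ / X](bigD1 i) //= invfM mulrA mulrAC mulfK.
have S12 : \sum_(i < k) c i / (z1 - xs i) = \sum_(i < k) c i / (z2 - xs i).
  by apply: (mulIf (invr_neq0 lp0)); rewrite -qpS // -qpS // qz1 qz2.
pose T := \sum_(i < k) c i / ((z1 - xs i) * (z2 - xs i)).
have T0 : T = 0.
  have : (z2 - z1) * T = (\sum_(i < k) c i / (z1 - xs i)) - \sum_(i < k) c i / (z2 - xs i).
    rewrite mulr_sumr -sumrB; apply: eq_bigr => i _.
    rewrite -mulrBr mulrCA; congr (_ * _).
    have u0 := nz z1 i pz1; have v0 := nz z2 i pz2.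
    have -> : z2 - z1 = (z2 - xs i) - (z1 - xs i) by rewrite opprB addrA subrK.
    by rewrite invfM mulrBl mulrCA mulfV // mulr1 mulrA mulfV // mul1r.
  rewrite S12 subrr.
  by move/eqP; rewrite mulf_eq0 subr_eq0 eq_sym (negbTE z12) => /eqP.
have cpos (i : 'I_k) : 0 < c i / lead_coef q.
  rewrite /c qeval' mulrAC [lead_coef q * _]mulrC mulfK // prod_omit -prodf_div.
  apply: prodr_gt0 => j _.
  have jk : (j < k.-1)%N := ltn_ord j.
  have jk' : (j < k)%N by apply: (ltn_trans jk).
  have j1k : (j.+1 < k)%N by rewrite -ltn_predRL.
  have [lo hi] := andP (inter j (eq_ind_r (fun m => (j < m.-1)%N) jk sps)).
  rewrite /xs /= /bump; case: leqP => ij.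
    rewrite add1n -mulrNN -invrN !opprB divr_gt0 // subr_gt0.
      by apply: le_lt_trans lo; apply: le_ps.
    by apply: lt_ps => //; rewrite ltnS.
  rewrite -[(false + j)%N]/(j : nat) divr_gt0 // subr_gt0.
    by apply: lt_le_trans hi _; apply: le_ps.
  by apply: lt_ps.
have := @sum_ne0 C k (fun i => c i / lead_coef q) (fun i => z1 - xs i)
  (fun i => z2 - xs i) e g k0 cpos.
have := xab; move=> xab'.
have hu i : Qc (e / (z1 - xs i)) by case/andP: (xab' i) => ?; apply: he.
have hv i : Qc (g / (z2 - xs i)) by case/andP: (xab' i) => ?; apply: hg.
move=> /(_ hu hv).
have -> : \sum_(i < k) c i / lead_coef q / ((z1 - xs i) * (z2 - xs i)) =
    (lead_coef q)^-1 * T.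
  by rewrite /T mulr_sumr; apply: eq_bigr => i _; rewrite mulrAC mulrC.
by rewrite T0 mulr0 eqxx.
Qed.
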